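(* There is a topological space of size $2^{2^{\mathfrak{c}}}$ which is $nwd$-separable, but neither $d$-separable nor $NWD$-separable.
   Context: A space is $nwd$-separable if it has a dense subset which is a countable union of nowhere dense sets; $d$-separable if it has a dense subset which is a countable union of discrete subspaces. A space $X$ is $NWD$-separable if for every sequence $\{D_n:n<\omega\}$ of dense subsets of $X$ there are nowhere dense sets $E_n\subseteq D_n$ such that $\bigcup_{n<\omega}E_n$ is dense. $\mathfrak{c}=2^{\aleph_0}$. *)

(* Defs.v *)
From HB Require Import structures.
From mathcomp Require Import all_boot all_order.
From mathcomp Require Import boolp classical_sets functions cardinality topology.
Set Implicit Arguments. Unset Strict Implicit. Unset Printing Implicit Defensive.
Local Open Scope classical_set_scope.

Definition nowhere_dense (T : topologicalType) (A : set T) : Prop :=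
  interior (closure A) = set0.

Definition discrete_subspace (T : topologicalType) (A : set T) : Prop :=
  forall x, A x -> exists U : set T, open U /\ U x /\ U `&` A = [set x].

Definition nwd_separable (T : topologicalType) : Prop :=
  exists E : nat -> set T, (forall n, nowhere_dense (E n)) /\
    dense (\bigcup_n E n).

Definition d_separable (T : topologicalType) : Prop :=
  exists E : nat -> set T, (forall n, discrete_subspace (E n)) /\
    dense (\bigcup_n E n).

Definition NWD_separable (T : topologicalType) : Prop :=
  forall D : nat -> set T, (forall n, dense (D n)) ->
  exists E : nat -> set T, (forall n, E n `<=` D n /\ nowhere_dense (E n)) /\
    dense (\bigcup_n E n).

(* Main.v *)
Require Import Defs.
From mathcomp Require Import all_boot all_order.
From mathcomp Require Import boolp classical_sets functions cardinality topology.
From HB Require Import structures.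
Local Open Scope classical_set_scope.
Local Open Scope card_scope.

Definition Y : Type := set (set (set nat)).
Definition mk (n : nat) : set (set nat) := [set [set n]].
Definition lev (A : Y) : option nat :=
  match pselect (exists n, A (mk n)) with
  | left h => Some (projT1 (cid h)) | right _ => None end.
Definition geb (b : nat) (o : option nat) : Prop :=
  match o with None => True | Some a => (b <= a)%N end.
Definition Bs (b : nat) (C : set Y) : set Y := [set y | geb b (lev y) /\ ~ C y].
Definition op (U : set Y) : Prop := forall x, U x ->
  exists b C, countable C /\ Bs b C x /\ Bs b C `<=` U.

Lemma countU (T : Type) (A B : set T) : countable A -> countable B -> countable (A `|` B).
Proof.
move=> cA cB.
have -> : A `|` B = \bigcup_(i in [set: bool]) (if i then A else B).
  apply/seteqP; split=> x.
  - by case=> h; [exists true|exists false].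
  - by case=> -[] _ h; [left|right].
apply: bigcup_countable; first exact: countableP.
by move=> [] _.
Qed.

Lemma opT : op setT.
Proof. move=> x _; exists 0%N, set0; split=> //; split=> //; split=> //. by case: (lev x). Qed.

Lemma geb_max b1 b2 o : geb (maxn b1 b2) o <-> geb b1 o /\ geb b2 o.
Proof. case: o => [a|] //=; rewrite geq_max; split; [by move/andP|by case=> -> ->]. Qed.

Lemma opI : setI_closed op.
Proof.
move=> U V hU hV x [Ux Vx].
have [b1 [C1 [c1 [Bx1 s1]]]] := hU x Ux.
have [b2 [C2 [c2 [Bx2 s2]]]] := hV x Vx.
exists (maxn b1 b2), (C1 `|` C2); split; first exact: countU.
split.
  case: Bx1 Bx2 => g1 n1 [g2 n2]; split; first by apply/geb_max.
  by case.
move=> y [/geb_max [g1 g2] nC]; split.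
  by apply: s1; split=> // h; apply: nC; left.
by apply: s2; split=> // h; apply: nC; right.
Qed.

Lemma op_bigU (I : Type) (f : I -> set Y) : (forall i, op (f i)) -> op (\bigcup_i f i).
Proof.
move=> h x [i _ fxi].
have [b [C [c [Bx s]]]] := h i x fxi.
exists b, C; split=> //; split=> // y /s fy; by exists i.
Qed.

Definition X : Type := Y.
HB.instance Definition _ := gen_eqMixin X.
HB.instance Definition _ := gen_choiceMixin X.
HB.instance Definition _ := isOpenTopological.Build X opT opI op_bigU.

Lemma nbhsX (x : X) (A : set X) : nbhs x A <-> exists b C, countable C /\ Bs b C x /\ Bs b C `<=` A.
Proof.
split.
  move=> [B [oB Bx sBA]].
  have [b [C [c [Bx' s]]]] := oB x Bx.
  by exists b, C; split=> //; split=> // y /s /sBA.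
move=> [b [C [c [Bx s]]]]; exists (Bs b C); split=> //.
move=> y By; exists b, C. split => //. split => //.
Qed.

Lemma openX (A : set X) : open A <-> op A.
Proof.
rewrite openE; split.
  move=> h x Ax; have /nbhsX [b [C [c [Bx s]]]] := h x Ax.
  by exists b, C.
move=> h x Ax; apply/nbhsX; exact: h.
Qed.

Definition fP (P : set nat) : set (set nat) := [set Q | Q = set0 \/ Q = P].
Definition io (o : option nat) (P : set nat) : Y :=
  match o with Some n => [set Z | Z = mk n \/ Z = fP P] | None => [set Z | Z = fP P] end.

Lemma mk_inj k n : mk k = mk n -> k = n.
Proof.
move=> E; have : mk n [set k] by rewrite -E.
rewrite /mk /= => E'; have : [set n] k by rewrite -E'.
by [].
Qed.

Lemma mk_fP k P : mk k <> fP P.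
Proof.
move=> E; have : mk k set0 by rewrite E; left.
rewrite /mk /= => E'; have : (set0 : set nat) k by rewrite E'.
by [].
Qed.

Lemma fP_inj : injective fP.
Proof.
move=> P P' E.
have h1 : fP P' P by rewrite -E; right.
have h2 : fP P P' by rewrite E; right.
case: h1 => // e1; case: h2 => // e2; by rewrite e1 e2.
Qed.

Lemma lev_io o P : lev (io o P) = o.
Proof.
case: o => [n|]; rewrite /lev; case: pselect => [h|h].
- by case: (cid h) => k /= [/mk_inj ->|/mk_fP].
- by exfalso; apply: h; exists n; left.
- by case: (cid h) => k /= /mk_fP.
- by [].
Qed.

Lemma io_inj o : injective (io o).
Proof.
move=> P P' E; apply: fP_inj.
have : io o P' (fP P) by rewrite -E; case: o {E} => [n|] /=; [right|].
case: o {E} => [n|] /=; last by [].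
by case=> // /esym /mk_fP.
Qed.

Lemma cantor (h : set nat -> nat) : ~ injective h.
Proof.
move=> hi.
pose P := [set n | exists Q, h Q = n /\ ~ Q n].
have [Pn|nPn] := pselect (P (h P)).
  by case: (Pn) => Q [/hi e nQ]; apply: nQ; rewrite e.
by apply: (nPn); exists P; split.
Qed.

Lemma fiber_unc o : ~ countable [set y : Y | lev y = o].
Proof.
move=> /countable_injP [g gi].
apply: (@cantor (fun P => g (io o P))) => P P' e.
apply: (@io_inj o); apply: gi => //; rewrite inE /=; exact: lev_io.
Qed.

Lemma avoid (T : Type) (F C : set T) : ~ countable F -> countable C -> exists y, F y /\ ~ C y.
Proof.
move=> nF cC; apply: contrapT => h; apply: nF.
apply: sub_countable cC; apply: subset_card_le => y Fy.
by apply: contrapT => nC; apply: h; exists y.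
Qed.

Arguments avoid {T F C}.

Lemma count_not_dense (U : set X) : countable U -> ~ dense U.
Proof.
move=> cU dU.
have [y [ly nU]] := avoid (fiber_unc None) cU.
have oB : open (Bs 0 U : set X).
  by apply/openX => x Bx; exists 0%N, U; split=> //; split.
have ne : (Bs 0 U : set X) !=set0 by exists y; split=> //; rewrite ly.
have [z [[_ nz] Uz]] := dU (Bs 0 U) ne oB.
exact: nz Uz.
Qed.

Lemma exists_min (S : set X) : (exists y, S y) ->
  exists x, S x /\ forall z, S z -> forall b, geb b (lev x) -> geb b (lev z).
Proof.
move=> [y0 Sy0].
have [[y [n [Sy ly]]]|h] := pselect (exists y n, S y /\ lev y = Some n).
  have ex : exists n, (fun n => `[< exists y, S y /\ lev y = Some n >]) n.
    by exists n; apply/asboolP; exists y.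
  case: (ex_minnP ex) => k /asboolP [x [Sx lx]] mink.
  exists x; split=> // z Sz b; rewrite lx /=; case lz: (lev z) => [j|] //= bk.
  apply: leq_trans bk (mink j _); apply/asboolP; by exists z.
exists y0; split => // z Sz b _; case lz: (lev z) => [j|] //=.
by exfalso; apply: h; exists z, j.
Qed.

Lemma discrete_countable (S : set X) : discrete_subspace S -> countable S.
Proof.
move=> dS.
have [ne|e] := pselect (exists y, S y); last first.
  have -> : S = set0 by apply/seteqP; split=> // y Sy; apply: e; exists y.
  exact: countable0.
have [x [Sx mx]] := @exists_min S ne.
have [U [oU [Ux UE]]] := dS x Sx.
have [b [C [c [Bx s]]]] := (proj1 (openX U)) oU x Ux.
apply: (@sub_countable _ _ S (C `|` [set x])); last exact: countU c (countable1 x).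
apply: subset_card_le => z Sz.
have [Cz|nCz] := pselect (C z); first by left.
right.
have Uz : U z by apply: s; split=> //; apply: mx => //; case: Bx.
have : (U `&` S) z by split.
by rewrite UE.
Qed.

Theorem mainTheorem11 :
  exists T : topologicalType,
    [set: T] #= [set: set (set (set nat))] /\
    nwd_separable T /\ ~ d_separable T /\ ~ NWD_separable T.
Proof.
exists X; split; first exact: card_eqxx.
split.
  exists (fun n => [set y : X | lev y = Some n]); split.
    move=> n; rewrite /nowhere_dense; apply/seteqP; split=> // x.
    move=> /nbhsX [b [C [c [Bx s]]]].
    have [y [ly nC]] := avoid (fiber_unc None) c.
    have cly : closure [set y : X | lev y = Some n] y by apply: s; split=> //; rewrite ly.
    have nb : nbhs (y : X) (Bs n.+1 set0 : set X).
      apply/nbhsX; exists n.+1, set0; split; first exact: countable0.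
      split; last by [].
      by split=> //; move: ly => /= ->.
    have [z [lz [gz _]]] := cly _ nb.
    by move: gz; rewrite lz /= ltnn.
  move=> O [x Ox] /openX oO.
  have [b [C [c [_ s]]]] := oO x Ox.
  have [y [ly nC]] := avoid (fiber_unc (Some b)) c.
  exists y; split; first by apply: s; split=> //; rewrite ly /=.
  by exists b.
split.
  move=> [E [hE dE]]; apply: (@count_not_dense _ _ dE).
  apply: bigcup_countable; first exact: countableP.
  by move=> n _; apply: discrete_countable.
move=> h.
have dD : forall n : nat, dense [set y : X | lev y = None].
  move=> _ O [x Ox] /openX oO.
  have [b [C [c [_ s]]]] := oO x Ox.
  have [y [ly nC]] := avoid (fiber_unc None) c.
  by exists y; split=> //; apply: s; split=> //; rewrite ly.
have [E [hE dE]] := h _ dD.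
apply: (@count_not_dense _ _ dE).
apply: bigcup_countable; first exact: countableP.
move=> n _; have [sub nw] := hE n.
apply: contrapT => nc.
have cl : closure (E n) = setT.
  apply/seteqP; split=> // p _ B /nbhsX [b [C [c [_ s]]]].
  have [y [Ey nC]] := avoid nc c.
  exists y; split=> //; apply: s; split=> //; by rewrite (sub _ Ey).
have : interior (closure (E n)) (set0 : X).
  by rewrite cl; exact: filterT.
by rewrite nw.
Qed.
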